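(* Let $G$ be a simple cubic graph on vertex set $[n]$ with girth at least $5$, let $A$ be a MAI set of $G$ and $B=V(G)\setminus A$, and let $Y$ (resp. $Z$) be the set of vertices of degree $1$ in $G[A]$ (resp. in $G[B]$). Then (i) each vertex of $Z$ has at most one neighbour in $Y$; (ii) each vertex of $Y$ has at most one neighbour in $Z$.
   Context: A vertex set $A$ of a graph $G$ is an AI set (almost independent set) if $\Delta(G[A])\le 1$, i.e. every component of the induced subgraph $G[A]$ is a single vertex or a single edge. A vertex set $A$ is a MAI set (maximum almost independent set) of $G$ if (M1) $A$ is an AI set, (M2) $A$ contains an independent set of size $\alpha(G)$, and (M3) $A$ has maximum cardinality among all vertex sets satisfying (M1) and (M2). $\alpha(G)$ is the independence number of $G$. *)

(* Defs.v *)
From mathcomp Require Import all_boot all_order.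
Set Implicit Arguments. Unset Strict Implicit. Unset Printing Implicit Defensive.

Section Graphs.
Variable (T : finType) (e : rel T).

Definition simple_graph : Prop := irreflexive e /\ symmetric e.

Definition nbh (x : T) : {set T} := [set y | e x y].

Definition cubic : Prop := forall x : T, #|nbh x| = 3.

Definition no_triangle : Prop :=
  forall a b c : T, ~ [&& e a b, e b c & e c a].
Definition no_C4 : Prop :=
  forall a b c d : T, a != c -> b != d ->
    ~ [&& e a b, e b c, e c d & e d a].
Definition girth_ge5 : Prop := no_triangle /\ no_C4.

Definition independent (S : {set T}) : bool :=
  [forall x in S, forall y in S, ~~ e x y].

Definition alpha : nat := \max_(S : {set T} | independent S) #|S|.

Definition ideg (A : {set T}) (x : T) : nat := #|nbh x :&: A|.

Definition AI (A : {set T}) : bool := [forall x in A, ideg A x <= 1].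

Definition M12 (A : {set T}) : bool :=
  AI A && [exists S : {set T}, [&& S \subset A, independent S & #|S| == alpha]].

Definition MAI (A : {set T}) : Prop :=
  M12 A /\ forall B : {set T}, M12 B -> #|B| <= #|A|.

Definition deg1 (A : {set T}) : {set T} := [set x in A | ideg A x == 1].

End Graphs.

(* Main.v *)
Require Import Defs.
From mathcomp Require Import all_boot all_order.
Set Implicit Arguments. Unset Strict Implicit. Unset Printing Implicit Defensive.

Lemma indepP (T : finType) (e : rel T) (S : {set T}) :
  reflect (forall x y, x \in S -> y \in S -> ~~ e x y) (independent e S).
Proof.
apply: (iffP forall_inP) => [H x y xS yS | H x xS].
  by move/forall_inP: (H x xS); apply.
by apply/forall_inP => y yS; apply: H.
Qed.

Lemma indep_le_alpha (T : finType) (e : rel T) (S : {set T}) :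
  independent e S -> #|S| <= alpha e.
Proof. move=> iS; exact: (@leq_bigmax_cond _ (independent e) (fun S => #|S|) S iS). Qed.

Lemma add_contra (T : finType) (e : rel T) (S : {set T}) b :
  simple_graph e -> independent e S -> #|S| = alpha e ->
  b \notin S -> (forall x, x \in S -> ~~ e b x) -> False.
Proof.
move=> [irr sym] iS cS bS H.
have : independent e (b |: S).
  apply/indepP => x y; rewrite !in_setU1 => /predU1P[->|xS] /predU1P[->|yS].
  - by rewrite irr.
  - exact: H.
  - by rewrite sym; apply: H.
  - by move/indepP: iS; apply.
by move/indep_le_alpha; rewrite cardsU1 bS -cS add1n ltnn.
Qed.

Lemma avoid (T : finType) (e : rel T) (A S : {set T}) y :
  simple_graph e -> AI e A ->
  S \subset A -> independent e S -> y \in A -> ideg e A y = 1 ->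
  exists S' : {set T}, [/\ S' \subset A, independent e S', #|S'| = #|S|, y \notin S' &
     forall x, x \in S' -> x \in S \/ e y x].
Proof.
move=> [irr sym] aiA sSA iS yA dy.
case: (boolP (y \in S)) => yS; last by exists S; split=> // x; left.
move/eqP/cards1P: dy => [y' Hy'].
have : y' \in nbh e y :&: A by rewrite Hy' set11.
rewrite !inE => /andP[eyy' y'A].
have y'S : y' \notin S.
  by apply/negP=> y'S; move/indepP: iS => /(_ y y' yS y'S); rewrite eyy'.
have yy' : y != y' by apply/eqP => E; move: eyy'; rewrite -E irr.
exists (y' |: (S :\ y)); split.
- apply/subsetP => x; rewrite in_setU1 in_setD1 => /predU1P[->//|/andP[_ xS]].
  exact: (subsetP sSA).
- have key : forall w, w \in S :\ y -> ~~ e y' w.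
    move=> w; rewrite in_setD1 => /andP[wy wS]; apply/negP => ey'w.
    have hle := forall_inP aiA y' y'A; rewrite /ideg in hle.
    have : [set y; w] \subset nbh e y' :&: A.
      apply/subsetP => u; rewrite !inE => /orP[]/eqP->.
        by rewrite sym eyy' yA.
      by rewrite ey'w (subsetP sSA).
    move/subset_leq_card; rewrite cards2 eq_sym wy => h.
    by have := leq_trans h hle.
  apply/indepP => x z.
  rewrite !in_setU1 => /predU1P[->|xS] /predU1P[->|zS].
  + by rewrite irr.
  + exact: key.
  + by rewrite sym; apply: key.
  + move: xS zS; rewrite !in_setD1 => /andP[_ xS] /andP[_ zS].
    by move/indepP: iS; apply.
- rewrite cardsU1 in_setD1 (negbTE y'S) andbF /=.
  by rewrite [RHS](cardsD1 y) yS.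
- by rewrite in_setU1 in_setD1 eqxx (negbTE yy').
- move=> x; rewrite in_setU1 in_setD1 => /predU1P[->|/andP[_ xS]]; by [right|left].
Qed.

Lemma Zcard (T : finType) (e : rel T) (A : {set T}) z :
  cubic e -> z \in deg1 e (~: A) -> #|nbh e z :&: A| = 2.
Proof.
move=> cub; rewrite inE => /andP[_ /eqP h]; rewrite /ideg in h.
have := cardsID A (nbh e z); rewrite setDE h cub => H.
by apply/eqP; rewrite -(eqn_add2r 1) H.
Qed.

Lemma two_elems (T : finType) (X : {set T}) a b x :
  #|X| = 2 -> a \in X -> b \in X -> a != b -> x \in X -> x = a \/ x = b.
Proof.
move=> c2 aX bX ab xX.
have sub : [set a; b] \subset X by apply/subsetP=> u; rewrite !inE => /orP[]/eqP->.
have : [set a; b] == X by rewrite eqEcard sub cards2 ab c2.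
move/eqP=> E; move: xX; rewrite -E !inE => /orP[]/eqP; auto.
Qed.

Theorem lemma8 (n : nat) (e : rel 'I_n) (A : {set 'I_n}) :
  simple_graph e -> cubic e -> girth_ge5 e -> MAI e A ->
  let B := ~: A in
  let Y := deg1 e A in
  let Z := deg1 e B in
  (forall z, z \in Z -> #|nbh e z :&: Y| <= 1) /\
  (forall y, y \in Y -> #|nbh e y :&: Z| <= 1).
Proof.
move=> sg cub [notri noc4] [m12 maxA] B Y Z.
have [irr sym] := sg.
move: (m12) => /andP[aiA /existsP[S0 /and3P[s0A i0 /eqP c0]]].
have inA : forall x, x \in deg1 e A -> x \in A /\ ideg e A x = 1.
  by move=> x; rewrite inE => /andP[-> /eqP].
have inZ : forall x, x \in Z -> x \notin A.
  by move=> x; rewrite inE inE => /andP[].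
split.
- move=> z zZ; rewrite leqNgt; apply/negP => /card_gt1P [y1 [y2 [y1in y2in y12]]].
  move: y1in y2in; rewrite !inE => /andP[ezy1 /andP[y1A /eqP d1]] /andP[ezy2 /andP[y2A /eqP d2]].
  have c2 := Zcard cub zZ.
  have [S1 [s1A i1 c1 y1S1 S1p]] := avoid sg aiA s0A i0 y1A d1.
  have [S2 [s2A i2 c2' y2S2 S2p]] := avoid sg aiA s1A i1 y2A d2.
  have y1S2 : y1 \notin S2.
    apply/negP => /S2p[]; first by apply/negP.
    move=> e21; apply: (notri z y1 y2); by rewrite ezy1 sym e21 sym ezy2.
  apply: (add_contra sg i2 _ (b := z)); first by rewrite c2' c1.
    by apply/negP => /(subsetP s2A); apply/negP; apply: inZ.
  move=> x xS; apply/negP => ezx.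
  have xA := subsetP s2A x xS.
  have : x \in nbh e z :&: A by rewrite !inE ezx xA.
  case/(two_elems c2 (a := y1) (b := y2)).
  + by rewrite !inE ezy1 y1A.
  + by rewrite !inE ezy2 y2A.
  + exact: y12.
  + by move=> E; move: xS; rewrite E (negbTE y1S2).
  + by move=> E; move: xS; rewrite E (negbTE y2S2).
- move=> y yY; rewrite leqNgt; apply/negP => /card_gt1P [z1 [z2 [z1in z2in z12]]].
  move: z1in z2in; rewrite !in_setI ![_ \in nbh e _]inE => /andP[eyz1 z1Z] /andP[eyz2 z2Z].
  have [yA dy] := inA y yY.
  have [S1 [s1A i1 c1 yS1 S1p]] := avoid sg aiA s0A i0 yA dy.
  have C : forall z, e y z -> z \in Z -> forall v, v \in nbh e z :&: A -> v != y ->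
      ideg e A v = 0.
    move=> z eyz zZ v; rewrite !inE => /andP[ezv vA] vy.
    have hle := forall_inP aiA v vA.
    move: hle; case Hd: (ideg e A v) => [|[|//]] _ //.
    have [S2 [s2A i2 c2 vS2 S2p]] := avoid sg aiA s1A i1 vA Hd.
    have yS2 : y \notin S2.
      apply/negP => /S2p[]; first by apply/negP.
      move=> evy; apply: (notri v y z); by rewrite evy eyz ezv.
    exfalso; apply: (add_contra sg i2 _ (b := z)); first by rewrite c2 c1.
      by apply/negP => /(subsetP s2A); apply/negP; apply: inZ.
    move=> x xS; apply/negP => ezx.
    have xA := subsetP s2A x xS.
    have : x \in nbh e z :&: A by rewrite !inE ezx xA.
    case/(two_elems (Zcard cub zZ) (a := y) (b := v)).
    + by rewrite !inE sym eyz yA.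
    + by rewrite !inE ezv vA.
    + by rewrite eq_sym.
    + by move=> E; move: xS; rewrite E (negbTE yS2).
    + by move=> E; move: xS; rewrite E (negbTE vS2).
  pose A' := z1 |: (z2 |: (A :\ y)).
  have z1A := inZ _ z1Z.
  have z2A := inZ _ z2Z.
  have nz : forall a b, a \in [set z1; z2] -> b \in [set z1; z2] -> ~~ e a b.
    move=> a b; rewrite !inE => /orP[]/eqP-> /orP[]/eqP->; rewrite ?irr //;
    apply/negP => h.
      by apply: (notri y z1 z2); rewrite eyz1 h sym eyz2.
    by apply: (notri y z2 z1); rewrite eyz2 h sym eyz1.
  have M' : M12 e A'.
    apply/andP; split; last first.
      apply/existsP; exists S1; apply/and3P; split; rewrite ?i1 ?c1 ?c0 //.
      apply/subsetP => x xS; rewrite !in_setU1 in_setD1 (subsetP s1A x xS) andbT.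
      apply/orP; right; apply/orP; right; apply/negP => /eqP E.
      by move: xS; rewrite E (negbTE yS1).
    apply/forall_inP => x; rewrite /ideg.
    have zcase : x \in [set z1; z2] -> #|nbh e x :&: A'| <= 1.
      move=> xz.
      have hz : x \in Z /\ e y x by case/set2P: xz => ->.
      have sub : nbh e x :&: A' \subset (nbh e x :&: A) :\ y.
        apply/subsetP => u; rewrite !inE => /andP[exu].
        case/or3P => [/eqP E|/eqP E|/andP[-> ->]]; last by rewrite exu.
          by move: (nz x u xz); rewrite E !inE eqxx /= => /(_ isT); rewrite -E exu.
        by move: (nz x u xz); rewrite E !inE eqxx orbT => /(_ isT); rewrite -E exu.
      have c1' : #|(nbh e x :&: A) :\ y| = 1.
        have yin : y \in nbh e x :&: A by rewrite !inE sym hz.2 yA.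
        have := Zcard cub hz.1; rewrite (cardsD1 y) yin.
        by move=> [].
      by rewrite -c1' subset_leq_card.
    rewrite in_setU1 in_setU1 => /or3P[/eqP E|/eqP E|].
    + by apply: zcase; rewrite E !inE eqxx.
    + by apply: zcase; rewrite E !inE eqxx orbT.
    rewrite in_setD1 => /andP[xy xA].
    case E1: (e x z1); case E2: (e x z2).
    + exfalso; apply: (noc4 y z1 x z2); [by rewrite eq_sym| exact: z12|].
      by rewrite eyz1 sym E1 E2 sym eyz2.
    + have h0 := C z1 eyz1 z1Z x; rewrite !inE sym E1 xA in h0.
      have /cards0_eq N0 := h0 isT xy.
      have sub : nbh e x :&: A' \subset [set z1].
        apply/subsetP => u; rewrite !inE => /andP[exu].
        case/or3P => [->//|/eqP E|/andP[_ uA]]; first by move: exu; rewrite E E2.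
        have : u \in nbh e x :&: A by rewrite !inE exu uA.
        by rewrite N0 inE.
      by have := subset_leq_card sub; rewrite cards1.
    + have h0 := C z2 eyz2 z2Z x; rewrite !inE sym E2 xA in h0.
      have /cards0_eq N0 := h0 isT xy.
      have sub : nbh e x :&: A' \subset [set z2].
        apply/subsetP => u; rewrite !inE => /andP[exu].
        case/or3P => [/eqP E|->//|/andP[_ uA]]; first by move: exu; rewrite E E1.
        have : u \in nbh e x :&: A by rewrite !inE exu uA.
        by rewrite N0 inE.
      by have := subset_leq_card sub; rewrite cards1.
    + have sub : nbh e x :&: A' \subset nbh e x :&: A.
        apply/subsetP => u; rewrite !inE => /andP[exu].
        case/or3P => [/eqP E|/eqP E|/andP[_ uA]]; rewrite ?exu ?uA //.
          by move: exu; rewrite E E1.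
        by move: exu; rewrite E E2.
      exact: leq_trans (subset_leq_card sub) (forall_inP aiA x xA).
  have := maxA A' M'.
  rewrite /A' cardsU1 cardsU1 !in_setU1 !in_setD1 (negbTE z12) (negbTE z1A) (negbTE z2A) !andbF /=.
  by rewrite [X in _ <= X](cardsD1 y A) yA add1n ltnn.
Qed.
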